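(* Let $(X,\delta)$ be a diversity with $|X|=n$. The following are equivalent: (i) $(X,\delta)$ is $L_1$-embeddable; (ii) $(X,\delta)$ is $\ell_1^m$-embeddable for some $m\le\binom{n}{\lfloor n/2\rfloor}$; (iii) $\delta$ is a non-negative linear combination of cut diversities $\delta_U$, $U\subseteq X$.
   Context: A diversity on a set $X$ is a function $\delta$ from finite subsets of $X$ to $\mathbb{R}$ with $\delta(A)\ge 0$, $\delta(A)=0$ whenever $|A|\le 1$ (values $0$ on larger sets are allowed), and $\delta(A\cup B)+\delta(B\cup C)\ge\delta(A\cup C)$ for all finite $A,B,C$ with $B\neq\emptyset$. For a measure space $(\Omega,\mathcal{A},\mu)$, the $L_1$ diversity is $(L_1(\Omega,\mu),\delta_1)$ with $\delta_1(F)=\int_\Omega\max\{|f(\omega)-g(\omega)|:f,g\in F\}\,d\mu(\omega)$ for finite $F$; $(X,\delta)$ is $L_1$-embeddable if there is a map $\phi$ into some $L_1$ diversity with $\delta_1(\phi(A))=\delta(A)$ for all $A$. The $\ell_1^m$ diversity is $(\mathbb{R}^m,\delta_1)$ with $\delta_1(A)=\sum_{i=1}^m\max\{|a_i-b_i|:a,b\in A\}$, and $\ell_1^m$-embeddable means there is $\phi:X\to\mathbb{R}^m$ with $\delta_1(\phi(A))=\delta(A)$ for all $A$. For $U\subseteq X$ the cut diversity is $\delta_U(A)=1$ if $A\cap U$ and $A\setminus U$ are both nonempty, and $0$ otherwise. *)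

(* Defs.v *)
From HB Require Import structures.
From mathcomp Require Import all_boot all_order all_algebra.
From mathcomp Require Import all_classical all_reals all_analysis.
Set Implicit Arguments. Unset Strict Implicit. Unset Printing Implicit Defensive.
Import Order.TTheory GRing.Theory Num.Theory.
Local Open Scope ring_scope.

Definition diversity (R : realType) (X : finType) (delta : {set X} -> R) : Prop :=
  [/\ forall A : {set X}, 0 <= delta A,
      forall A : {set X}, (#|A| <= 1)%N -> delta A = 0
    & forall A B C : {set X}, B != finset.set0 -> delta (A :|: C) <= delta (A :|: B) + delta (B :|: C)].

Definition diam (R : realType) (X : finType) (f : X -> R) (A : {set X}) : R :=
  \big[Num.max/0]_(a in A) \big[Num.max/0]_(b in A) `|f a - f b|.

Definition L1_embeddable (R : realType) (X : finType) (delta : {set X} -> R) : Prop :=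
  exists (d : measure_display) (T : measurableType d)
         (mu : {measure set T -> \bar R}) (phi : X -> T -> R),
    (forall x, mu.-integrable setT (fun w => (phi x w)%:E)) /\
    (forall A : {set X},
        (delta A)%:E = (\int[mu]_(w in setT) (diam (fun x => phi x w) A)%:E)%E).

Definition l1m_embeddable (R : realType) (X : finType) (m : nat) (delta : {set X} -> R) : Prop :=
  exists phi : X -> 'I_m -> R,
    forall A : {set X}, delta A = \sum_(i < m) diam (fun x => phi x i) A.

Definition cut_div (R : realType) (X : finType) (U A : {set X}) : R :=
  if (A :&: U != finset.set0) && (A :\: U != finset.set0) then 1 else 0.

(* Main.v *)
Require Import Defs.
From HB Require Import structures.
From mathcomp Require Import all_boot all_order all_algebra.
From mathcomp Require Import all_classical all_reals all_analysis measurable_realfun.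
From mathcomp Require Import ring lra zify.
Import Order.TTheory GRing.Theory Num.Theory.
Local Open Scope ring_scope.
Local Notation set0 := finset.set0.

Section Div.
Variables (R : realType) (X : finType).
Implicit Types (f g : X -> R) (A U V : {set X}).

Lemma diam_set0 f : diam f set0 = 0.
Proof. by rewrite /diam big_pred0 // => x; rewrite inE. Qed.

Lemma diam_ge0 f A : 0 <= diam f A.
Proof. exact: bigmax_ge_id. Qed.

Lemma diam_eqP f A a b : a \in A -> b \in A ->
  (forall x, x \in A -> f b <= f x <= f a) -> diam f A = f a - f b.
Proof.
move=> aA bA H.
have hab : 0 <= f a - f b by have /andP[_ h] := H b bA; rewrite subr_ge0.
apply/le_anti/andP; split.
- apply: bigmax_le => // x xA; apply: bigmax_le => // y yA.
  have /andP[h1 h2] := H x xA; have /andP[h3 h4] := H y yA.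
  rewrite ler_norml; apply/andP; split; lra.
- apply: (bigmax_sup a) => //; apply: (bigmax_sup b) => //.
  exact: ler_norm.
Qed.

Lemma diam_eq_on f g A : {in A, f =1 g} -> diam f A = diam g A.
Proof. by move=> e; apply: eq_bigr => a aA; apply: eq_bigr => b bA; rewrite !e. Qed.

Lemma diam_const f A c : (forall x, x \in A -> f x = c) -> diam f A = 0.
Proof.
move=> H; case: (set_0Vmem A) => [->|[a aA]]; first exact: diam_set0.
by rewrite (@diam_eqP f A a a) ?subrr // => x xA; rewrite !H ?lexx.
Qed.

Lemma diam_shift f c A : diam (fun x => f x + c) A = diam f A.
Proof.
apply: eq_bigr => a _; apply: eq_bigr => b _.
by congr (`|_|); ring.
Qed.

Lemma diam_opp f A : diam (fun x => - f x) A = diam f A.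
Proof.
apply: eq_bigr => a _; apply: eq_bigr => b _.
have -> : - f a - - f b = - (f a - f b) by ring.
by rewrite normrN.
Qed.

Lemma ex_argmax f A : A != set0 ->
  exists2 a, a \in A & forall x, x \in A -> f x <= f a.
Proof.
case/set0Pn => a0 a0A.
case: (@arg_maxP _ _ _ a0 (mem A) f a0A) => a aA H.
by exists a.
Qed.

Lemma ex_argmin f A : A != set0 ->
  exists2 a, a \in A & forall x, x \in A -> f a <= f x.
Proof.
case/set0Pn => a0 a0A.
case: (@arg_minP _ _ _ a0 (mem A) f a0A) => a aA H.
by exists a.
Qed.

Lemma cut_divC U A : cut_div R (~: U) A = cut_div R U A.
Proof. by rewrite /cut_div [A :\: ~: U]finset.setDE finset.setCK -finset.setDE andbC. Qed.

Lemma diam_step g V l A : 0 <= l -> (forall x, 0 <= g x) ->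
  (forall x, x \notin V -> g x = 0) ->
  diam (fun x => l * (x \in V)%:R + g x) A = l * cut_div R V A + diam g A.
Proof.
move=> l0 g0 gV; rewrite /cut_div.
case: (set_0Vmem (A :&: V)) => [AV0|[a aAV]].
  rewrite AV0 eqxx /= mulr0 add0r; apply: diam_eq_on => x xA.
  have xV : x \notin V.
    apply/negP => xV; have : x \in A :&: V by rewrite inE xA xV.
    by rewrite AV0 inE.
  by rewrite (negbTE xV) mulr0 add0r.
case: (set_0Vmem (A :\: V)) => [AmV0|[b bAmV]].
  rewrite AmV0 eqxx andbF mulr0 add0r.
  rewrite (@diam_eq_on _ (fun x => g x + l)); first exact: diam_shift.
  move=> x xA; have xV : x \in V.
    apply/negPn/negP => xV; have : x \in A :\: V by rewrite inE xA xV.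
    by rewrite AmV0 inE.
  by rewrite xV mulr1 addrC.
have -> : A :&: V != set0 by apply/set0Pn; exists a.
have -> : A :\: V != set0 by apply/set0Pn; exists b.
rewrite /= mulr1.
have AVne : A :&: V != set0 by apply/set0Pn; exists a.
have [c cAV cmax] := @ex_argmax g _ AVne.
move: cAV bAmV; rewrite !inE => /andP[cA cV] /andP[bV bA].
have gb : g b = 0 by rewrite gV.
have gle : forall x, x \in A -> g x <= g c.
  move=> x xA; case: (boolP (x \in V)) => xV.
    by apply: cmax; rewrite inE xA xV.
  by rewrite gV.
rewrite (@diam_eqP _ A c b) //; last first.
  move=> x xA; rewrite (negbTE bV) mulr0 add0r gb cV mulr1 /=.
  have := g0 x; have := g0 c; have := gle x xA.
  case: (x \in V); rewrite ?mulr1 ?mulr0 => *; apply/andP; split; lra.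
rewrite (@diam_eqP _ A c b) //; last by move=> x xA; rewrite gb g0 gle.
rewrite /=.
rewrite (negbTE bV) cV gb /= mulr0 mulr1; ring.
Qed.

Lemma diam_chain (w : {set X} -> R) (L : seq {set X}) A :
  (forall U, 0 <= w U) -> sorted (fun U V => V \subset U) L ->
  diam (fun x => \sum_(U <- L) w U * (x \in U)%:R) A =
  \sum_(U <- L) w U * cut_div R U A.
Proof.
move=> w0; elim: L => [|V L IH] /= HL.
  by rewrite big_nil (@diam_const _ _ 0) // => x _; rewrite big_nil.
have HL' := path_sorted HL.
have allV : all (fun U => U \subset V) L.
  have tr : transitive (fun U V : {set X} => V \subset U).
    by move=> U1 U2 U3 h1 h2; exact: fintype.subset_trans h2 h1.
  exact: (order_path_min tr HL).
rewrite (_ : (fun x => _) = (fun x => w V * (x \in V)%:R +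
   \sum_(U <- L) w U * (x \in U)%:R)); last by apply/funext => x; rewrite big_cons.
rewrite diam_step ?IH ?big_cons //.
- by move=> x; apply: sumr_ge0 => U _; rewrite mulr_ge0.
- move=> x xV; rewrite big1_seq // => U /andP[_ UL].
  have sUV := allP allV U UL.
  have xU : x \notin U by apply/negP => xU; move/negP: xV; apply; exact: (fintype.subsetP sUV).
  by rewrite (negbTE xU) mulr0.
Qed.

Definition Bf f := \sum_x `|f x|.
Definition mn f U := \big[Num.min/Bf f]_(x in U) f x.
Definition mxc f U := \big[Num.max/- Bf f]_(x in ~: U) f x.
Definition coef f U := if (U != set0) && (~: U != set0)
  then Num.max 0 (mn f U - mxc f U) else 0.

Lemma le_Bf f x : `|f x| <= Bf f.
Proof. by rewrite /Bf (bigD1 x) //= lerDl sumr_ge0. Qed.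

Lemma mn_le f U x : x \in U -> mn f U <= f x.
Proof. by move=> xU; apply: bigmin_le_cond. Qed.

Lemma mxc_ge f U y : y \notin U -> f y <= mxc f U.
Proof. by move=> yU; apply: le_bigmax_cond; rewrite inE. Qed.

Lemma mn_eq f U x : x \in U -> (forall z, z \in U -> f x <= f z) -> mn f U = f x.
Proof.
move=> xU H; apply/le_anti; rewrite mn_le //=.
apply: le_bigmin => [|z zU]; last exact: H.
exact: le_trans (ler_norm _) (le_Bf f x).
Qed.

Lemma mxc_eq f U y : y \notin U -> (forall z, z \notin U -> f z <= f y) ->
  mxc f U = f y.
Proof.
move=> yU H; apply/le_anti; rewrite mxc_ge // andbT.
apply: bigmax_le => [|z]; last by rewrite inE; exact: H.
have := le_Bf f y; have : - f y <= `|f y| by rewrite -normrN ler_norm.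
lra.
Qed.

Lemma coef_ge0 f U : 0 <= coef f U.
Proof. by rewrite /coef; case: ifP => _; rewrite ?le_max ?lexx. Qed.

Lemma line f A : diam f A = \sum_U coef f U * cut_div R U A.
Proof.
case: (set_0Vmem A) => [->|[x0 _]].
  by rewrite diam_set0 big1 // => U _; rewrite /cut_div finset.set0I eqxx mulr0.
pose top (h : X -> R) := \big[Num.max/h x0]_x h x.
have topP h : exists2 a, (forall x, h x <= h a) & top h = h a.
  have Tn0 : [set: X] != set0 by apply/set0Pn; exists x0; rewrite inE.
  have [a _ Ha] := @ex_argmax h _ Tn0.
  exists a; first by move=> x; apply: Ha; rewrite inE.
  apply/le_anti/andP; split; last exact: le_bigmax.
  by apply: bigmax_le => [|x _]; apply: Ha; rewrite inE.
have [k] := ubnP #|[set x | f x < top f]|.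
elim: k f => // k IH f Hk.
have [a Ha Ta] := topP f.
rewrite Ta in Hk.
case: (set_0Vmem [set x | f x < f a]) => [E0|[a1' a1'C]].
  have fM : forall x, f x = f a.
    move=> x; apply/le_anti; rewrite Ha /= leNgt; apply/negP => lt.
    have : x \in [set x | f x < f a] by rewrite inE.
    by rewrite E0 inE.
  rewrite (@diam_const f A (f a)); last by move=> x _; rewrite fM.
  rewrite big1 // => U _; rewrite /coef.
  case: ifP => [/andP[/set0Pn[u uU] /set0Pn[v vU]]|_]; last by rewrite mul0r.
  rewrite (@mn_eq _ _ u) //; last by move=> z _; rewrite !fM.
  rewrite (@mxc_eq _ _ v); [|by move: vU; rewrite inE|by move=> z _; rewrite !fM].
  by rewrite !fM subrr maxxx mul0r.
set M := f a in Hk a1'C *.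
set C := [set x | f x < M] in Hk a1'C *.
have CneC : C != set0 by apply/set0Pn; exists a1'.
have [a1 a1C a1max] := @ex_argmax f C CneC.
set M' := f a1.
have M'M : M' < M by move: a1C; rewrite inE.
have fle : forall x, f x <= M by move=> x; exact: Ha.
have fC : forall x, x \in C -> f x <= M' by move=> x; exact: a1max.
have fnC : forall x, x \notin C -> f x = M.
  by move=> x; rewrite inE -leNgt => h; apply/le_anti; rewrite h fle.
pose g x := Num.min (f x) M'.
have gC : forall x, x \in C -> g x = f x by move=> x /fC h; rewrite /g min_l.
have gnC : forall x, x \notin C -> g x = M'.
  by move=> x /fnC h; rewrite /g h min_r // ltW.
have gle : forall x, g x <= M' by move=> x; rewrite /g ge_min lexx orbT.
have Hg : (#|[set x | (g x < top g)%R]| < k)%N.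
  have [a2 Ha2 Ta2] := topP g.
  have tg : top g = M'.
    rewrite Ta2; apply/le_anti; rewrite gle /=.
    by have := Ha2 a1; rewrite gC.
  rewrite tg.
  have sub : [set x | g x < M'] \proper C.
    rewrite properE; apply/andP; split.
      apply/fintype.subsetP => x; rewrite !inE /g gt_min ltxx orbF => h.
      exact: lt_trans h M'M.
    apply/fintype.subsetPn; exists a1 => //.
    by rewrite inE gC // /M' ltxx.
  by apply: leq_trans (proper_card sub) _; exact: Hk.
have IHg := IH g Hg.
set U0 := ~: C.
have aU0 : a \in U0 by rewrite inE inE ltxx.
have aC : a \notin C by rewrite inE ltxx.
have a1U0 : a1 \notin U0 by rewrite inE negbK.
have Ha' : diam f A = (M - M') * cut_div R U0 A + diam g A.
  rewrite -diam_opp.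
  pose h x := M' - g x.
  have -> : (fun x => - f x) =
     (fun x => ((M - M') * (x \in C)%:R + h x) + (- (M - M') - M')).
    apply/funext => x; rewrite /h; case: (boolP (x \in C)) => xC.
      by rewrite gC // mulr1; ring.
    by rewrite gnC // fnC // mulr0; ring.
  rewrite diam_shift diam_step.
  - rewrite /U0 cut_divC.
    rewrite (_ : h = fun x => - g x + M'); first by rewrite diam_shift diam_opp.
    by apply/funext => x; rewrite /h addrC.
  - by rewrite subr_ge0 ltW.
  - by move=> x; rewrite /h subr_ge0 gle.
  - by move=> x xC; rewrite /h gnC // subrr.
have Hb : forall U, coef f U = coef g U + (if U == U0 then M - M' else 0).
  move=> U; rewrite /coef.
  case: ifP => [/andP[Un0 Ucn0]|Hpr]; last first.
    case: eqP => [EU|_]; last by rewrite addr0.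
    exfalso; move/negbT: Hpr; rewrite negb_and !negbK EU => /orP[/eqP E|/eqP E].
      by move: aU0; rewrite E inE.
    by move: a1U0; rewrite -finset.in_setC E inE.
  case: (boolP (U == U0)) => [/eqP EU|NE]; last rewrite addr0.
    rewrite EU /U0.
    rewrite (@mn_eq f _ a) //; last by move=> z; rewrite inE => /fnC ->.
    rewrite (@mxc_eq f _ a1) //; last by move=> z; rewrite inE negbK => /fC.
    rewrite (@mn_eq g _ a) //; last by move=> z; rewrite inE => /gnC ->; rewrite gnC.
    rewrite (@mxc_eq g _ a1) //; last by move=> z _; rewrite (gC a1 a1C); exact: gle.
    rewrite gnC // gC // subrr maxxx add0r max_r //.
    by rewrite subr_ge0 ltW.
  case: (boolP (U0 \subset U)) => [sub|nsub].
    have [x1 x1U x1nU0] : exists2 x1, x1 \in U & x1 \notin U0.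
      apply/fintype.subsetPn; apply/negP => sU; move/eqP: NE; apply.
      by apply/eqP; rewrite finset.eqEsubset sU sub.
    have x1C : x1 \in C by move: x1nU0; rewrite inE negbK.
    have CU : forall z, z \notin U -> z \in C.
      move=> z zU; have : z \notin U0.
        by apply/negP => zU0; move/negP: zU; apply; exact: (fintype.subsetP sub).
      by rewrite inE negbK.
    have [y yU ymax] := @ex_argmax f (~: U) Ucn0.
    have ynU : y \notin U by move: yU; rewrite inE.
    have [x xU xmin] := @ex_argmin f U Un0.
    have xC : x \in C.
      rewrite inE; apply: le_lt_trans (xmin x1 x1U) _; by move: x1C; rewrite inE.
    rewrite (@mxc_eq f U y) //; last by move=> z zU; apply: ymax; rewrite inE.
    rewrite (@mxc_eq g U y) //; last first.
      by move=> z zU; rewrite !gC ?CU //; apply: ymax; rewrite inE.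
    rewrite (@mn_eq f U x) //.
    rewrite (@mn_eq g U x) //; last first.
      by move=> z zU; rewrite gC // /g le_min xmin //= fC.
    by rewrite (gC x xC) (gC y (CU y ynU)).
  have [y yU0 ynU] := fintype.subsetPn nsub.
  have yC : y \notin C by move: yU0; rewrite inE.
  have [u uU] := set0Pn _ Un0.
  rewrite !max_l ?addr0 //.
    have h1 := @mn_le g U u uU; have h2 := @mxc_ge g U y ynU.
    have h3 := gle u; rewrite gnC // in h2; lra.
  have h1 := @mn_le f U u uU; have h2 := @mxc_ge f U y ynU.
  have h3 := fle u; rewrite fnC // in h2; lra.
rewrite Ha' IHg.
under [RHS]eq_bigr => U _ do rewrite Hb mulrDl.
rewrite big_split /= [X in _ = _ + X](bigD1 U0) //= eqxx.
rewrite [X in _ = _ + (_ + X)]big1 ?addr0; last first.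
  by move=> U /negbTE ->; rewrite mul0r.
by rewrite addrC.
Qed.

Lemma series_fin (a : nat -> \bar R) m : (forall k, 0 <= a k)%E ->
  (forall k, (m <= k)%N -> a k = 0%E) ->
  (\sum_(k <oo) a k = \sum_(0 <= k < m) a k)%E.
Proof.
move=> a0 am; rewrite (@nneseries_split R a 0 m); last by move=> k _; exact: a0.
by rewrite add0n eseries0 ?adde0 // => k km _; apply: am.
Qed.

Lemma l1m_L1 (m : nat) (delta : {set X} -> R) :
  l1m_embeddable m delta -> L1_embeddable delta.
Proof.
case=> f Hf.
pose phi (x : X) (k : nat) : R := \sum_(i < m | (i : nat) == k) f x i.
have phiE x (i : 'I_m) : phi x i = f x i by rewrite /phi (big_pred1 i).
have phi0 x k : (m <= k)%N -> phi x k = 0.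
  move=> mk; rewrite /phi big_pred0 // => i.
  by apply/negbTE/eqP => ik; move: (ltn_ord i); rewrite ik ltnNge mk.
exists default_measure_display, nat, counting, phi.
split.
- move=> x; apply/integrableP; split; first by move=> _ Y _; exact: I.
  rewrite ge0_integral_count //.
  rewrite (@series_fin _ m); [|by move=> k; exact: abse_ge0|].
    under eq_bigr do rewrite abse_EFin.
    by rewrite sumEFin ltry.
  by move=> k mk; rewrite phi0 // abse0.
- move=> A.
  rewrite (@ge0_integral_count R (fun w => (diam (fun x => phi x w) A)%:E)); last first.
    by move=> k; rewrite lee_fin diam_ge0.
  rewrite (@series_fin _ m); first last.
  + move=> k mk; rewrite (@diam_const _ A 0) // => x _; exact: phi0.
  + by move=> k; rewrite lee_fin diam_ge0.
  rewrite Hf -sumEFin big_mkord; apply: eq_bigr => i _; congr EFin.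
  by apply: diam_eq_on => x _; rewrite phiE.
Qed.

Lemma measurable_bigmin d (T : measurableType d) (B : T -> R) (F : X -> T -> R)
  (P : pred X) :
  measurable_fun setT B -> (forall x, measurable_fun setT (F x)) ->
  measurable_fun setT (fun w => \big[Num.min/B w]_(x | P x) F x w).
Proof.
move=> mB mF; elim: (index_enum X) => [|i r IH].
  by under eq_fun do rewrite big_nil.
under eq_fun do rewrite big_cons.
case: (P i) => //; exact: measurable_minr.
Qed.

Lemma measurable_bigmax d (T : measurableType d) (B : T -> R) (F : X -> T -> R)
  (P : pred X) :
  measurable_fun setT B -> (forall x, measurable_fun setT (F x)) ->
  measurable_fun setT (fun w => \big[Num.max/B w]_(x | P x) F x w).
Proof.
move=> mB mF; elim: (index_enum X) => [|i r IH].
  by under eq_fun do rewrite big_nil.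
under eq_fun do rewrite big_cons.
case: (P i) => //; exact: measurable_maxr.
Qed.

Lemma L1_cut (delta : {set X} -> R) : L1_embeddable delta ->
  exists lam : {set X} -> R, (forall U, 0 <= lam U) /\
    forall A, delta A = \sum_U lam U * cut_div R U A.
Proof.
case=> d [T [mu [phi [Hint Hd]]]].
have mphi x : measurable_fun setT (phi x).
  by apply/measurable_EFinP; exact: measurable_int (Hint x).
have mB : measurable_fun setT (fun w => Bf (fun x => phi x w)).
  rewrite /Bf; apply: measurable_sum => x.
  apply: measurableT_comp; [exact: normr_measurable|exact: mphi].
have mc U : measurable_fun setT (fun w => coef (fun x => phi x w) U).
  rewrite /coef; case: (boolP ((U != set0) && (~: U != set0))) => HU; rewrite ?(negbTE HU) ?HU; last exact: measurable_cst.
  apply: (@measurable_maxr _ _ _ _ (cst 0)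
    (fun w => mn (fun x => phi x w) U - mxc (fun x => phi x w) U)).
    exact: measurable_cst.
  apply: measurable_funB.
    exact: measurable_bigmin.
  apply: measurable_bigmax => //.
  exact: measurable_funN.
have key A : (delta A)%:E = (\sum_U (\int[mu]_(w in setT)
      (coef (fun x => phi x w) U)%:E) * (cut_div R U A)%:E)%E.
  rewrite Hd.
  under eq_integral => w _ do rewrite line -sumEFin.
  rewrite ge0_integral_sum //; first last.
  - move=> U w _; rewrite lee_fin mulr_ge0 ?coef_ge0 //.
    by rewrite /cut_div; case: ifP.
  - move=> U; apply/measurable_EFinP.
    exact: (measurable_funM (mc U) (measurable_cst _)).
  apply: eq_bigr => U _.
  rewrite /cut_div; case: ifP => _.
    by under eq_integral do rewrite mulr1; rewrite mule1.
  by rewrite mule0 integral0_eq // => w _; rewrite mulr0.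
pose I U := (\int[mu]_(w in setT) (coef (fun x => phi x w) U)%:E)%E.
have I0 U : (0 <= I U)%E.
  by apply: integral_ge0 => w _; rewrite lee_fin coef_ge0.
have Ifin U : I U \is a fin_num.
  case: (boolP ((U != set0) && (~: U != set0))) => HU; last first.
    rewrite /I integral0_eq // => w _.
    by rewrite /coef (negbTE HU).
  have cutT : cut_div R U [set: X] = 1.
    by rewrite /cut_div finset.setTI finset.setTD HU.
  rewrite ge0_fin_numE // (@le_lt_trans _ _ (delta [set: X])%:E) ?ltry //.
  rewrite key (bigD1 U) //= cutT mule1 leeDl //.
  apply: sume_ge0 => V _; apply: mule_ge0 => //.
    exact: I0.
  by rewrite lee_fin /cut_div; case: ifP.
exists (fun U => fine (I U)); split.
  by move=> U; apply: fine_ge0.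
move=> A; have := key A.
rewrite (eq_bigr (fun U => (fine (I U) * cut_div R U A)%:E)); last first.
  by move=> U _; rewrite EFinM fineK.
by rewrite sumEFin => -[].
Qed.

Lemma le_sum_seq (I : eqType) (G : I -> R) (r : seq I) k :
  (forall i, 0 <= G i) -> k \in r -> G k <= \sum_(i <- r) G i.
Proof.
move=> G0; elim: r => // i r IH; rewrite inE big_cons => /orP[/eqP->|kr].
  by rewrite lerDl sumr_ge0.
by rewrite (le_trans (IH kr)) // lerDr.
Qed.

Definition chainsets (c : {set X} * seq X) : seq {set X} :=
  [seq c.1 :|: [set x in take j c.2] | j <- iota 0 (size c.2).+1].

Definition step (a : X) (c : {set X} * seq X) : seq ({set X} * seq X) :=
  (c.1, rcons c.2 a) ::
  (if c.2 is [::] then [::] else [:: (a |: c.1, take (size c.2).-1 c.2)]).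

Lemma sum_chainsets (F : {set X} -> R) c :
  \sum_(U <- chainsets c) F U =
  \sum_(j <- iota 0 (size c.2).+1) F (c.1 :|: [set x in take j c.2]).
Proof. by rewrite big_map. Qed.

Lemma sum_chainsets2 (F : {set X} -> R) B s :
  \sum_(U <- chainsets (B, s)) F U =
  \sum_(j <- iota 0 (size s).+1) F (B :|: [set x in take j s]).
Proof. by rewrite big_map. Qed.

Lemma sum_iotaS (G : nat -> R) k :
  \sum_(j <- iota 0 k.+1) G j = \sum_(j <- iota 0 k) G j + G k.
Proof. by rewrite -addn1 iotaD big_cat /= big_seq1 add0n. Qed.

Lemma step_sum (F : {set X} -> R) a c :
  \sum_(c' <- step a c) \sum_(U <- chainsets c') F U =
  \sum_(U <- chainsets c) F U + \sum_(U <- chainsets c) F (a |: U).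
Proof.
case: c => B s.
have Hl : \sum_(U <- chainsets (B, rcons s a)) F U =
   \sum_(U <- chainsets (B, s)) F U + F (a |: (B :|: [set x in s])).
  rewrite !sum_chainsets2 size_rcons sum_iotaS.
  rewrite take_oversize ?size_rcons //.
  have -> : [set x in rcons s a] = a |: [set x in s].
    by apply/setP => x; rewrite !inE mem_rcons inE.
  rewrite finset.setUCA; congr (_ + _).
  apply: eq_big_seq => j; rewrite mem_iota add0n => /andP[_ js].
  by rewrite -cats1 takel_cat.
have Hr : \sum_(U <- chainsets (B, s)) F (a |: U) =
   \sum_(j <- iota 0 (size s)) F (a |: (B :|: [set x in take j s])) +
   F (a |: (B :|: [set x in s])).
  by rewrite big_map sum_iotaS take_size.
rewrite Hr; case: s Hl Hr => [|z s'] Hl Hr.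
  have -> : step a (B, [::]) = [:: (B, rcons [::] a)] by [].
  by rewrite big_seq1 Hl big_nil; ring.
have -> : step a (B, z :: s') =
  [:: (B, rcons (z :: s') a); (a |: B, take (size s') (z :: s'))] by [].
have H2 : \sum_(U <- chainsets (a |: B, take (size s') (z :: s'))) F U =
   \sum_(j <- iota 0 (size (z :: s'))) F (a |: (B :|: [set x in take j (z :: s')])).
  rewrite sum_chainsets2 size_takel ?leqnSn //.
  apply: eq_big_seq => j; rewrite mem_iota add0n => /andP[_ js].
  by rewrite take_takel // finset.setUA.
rewrite big_cons big_seq1 Hl H2; ring.
Qed.

Lemma powerset_split (F : {set X} -> R) (G : {set X}) a : a \notin G ->
  \sum_(U : {set X} | U \subset a |: G) F U =
  \sum_(U : {set X} | U \subset G) F U + \sum_(U : {set X} | U \subset G) F (a |: U).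
Proof.
move=> aG.
rewrite (bigID (fun U : {set X} => a \in U)) /= addrC; congr (_ + _).
  apply: eq_bigl => U; apply/andP/idP => [[sU aU]|sU].
    apply/fintype.subsetP => x xU.
    have := fintype.subsetP sU x xU; rewrite !inE => /orP[/eqP xa|//].
    by move: aU; rewrite -xa xU.
  split; last by apply: contra aG => aU; exact: (fintype.subsetP sU).
  by apply: fintype.subset_trans sU _; exact: finset.subsetU1.
rewrite (reindex_onto (fun U => a |: U) (fun U => U :\ a)) /=; last first.
  by move=> U /andP[_ aU]; rewrite finset.setD1K.
apply: eq_bigl => U; apply/idP/idP.
  case/andP => /andP[sU _] /eqP E.
  have aU : a \notin U by rewrite -E !inE eqxx.
  apply/fintype.subsetP => x xU.
  have := fintype.subsetP sU x; rewrite !inE xU orbT => /(_ isT) /orP[/eqP xa|//].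
  by move: aU; rewrite -xa xU.
move=> sU; have aU : a \notin U.
  by apply: contra aG => aU; exact: (fintype.subsetP sU).
by rewrite finset.setU11 andbT finset.setU1K // eqxx andbT (finset.setUS _ sU).
Qed.

Definition inv_ok (e : seq X) (c : {set X} * seq X) :=
  [/\ uniq c.2, (forall x, x \in c.2 -> x \notin c.1),
      (forall x, x \in c.1 -> x \in e), {subset c.2 <= e} &
      (2 * #|c.1| + size c.2 = size e)%N].

Lemma scd (e : seq X) : uniq e -> exists D : seq ({set X} * seq X),
  (forall F : {set X} -> R, \sum_(c <- D) \sum_(U <- chainsets c) F U =
     \sum_(U : {set X} | U \subset [set x in e]) F U) /\
  (forall c, c \in D -> inv_ok e c).
Proof.
elim: e => [_|a e IH].
  have E0 : [set x in ([::] : seq X)] = set0 by apply/setP => x; rewrite !inE.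
  exists [:: (set0, [::])]; split.
    move=> F; rewrite big_seq1 sum_chainsets /= big_cons big_nil addr0 E0.
    by rewrite finset.setU0 (big_pred1 set0) // => U; rewrite /= finset.subset0.
  move=> c; rewrite inE => /eqP ->; split => //=; first by move=> x; rewrite inE.
  by rewrite finset.cards0.
rewrite cons_uniq => /andP[ae ue].
have [D [HS HI]] := IH ue.
exists (flatten [seq step a c | c <- D]); split.
  move=> F; rewrite big_flatten big_map.
  under eq_bigr do rewrite step_sum.
  rewrite big_split /= HS (HS (fun U => F (a |: U))).
  by rewrite finset.set_cons powerset_split // inE.
move=> c' /flattenP [cs /mapP[c cD ->] c'in].
have [u1 u2 u3 u4 u5] := HI c cD.
move: c'in; rewrite /step; case: c cD u1 u2 u3 u4 u5 => B s cD u1 u2 u3 u4 u5.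
rewrite /= in u1 u2 u3 u4 u5.
have aB : a \notin B by apply/negP => /u3; rewrite (negbTE ae).
have aS : a \notin s by apply/negP => /u4; rewrite (negbTE ae).
rewrite inE => /orP[/eqP ->|].
  split => /=.
  - by rewrite rcons_uniq aS u1.
  - by move=> x; rewrite mem_rcons inE => /orP[/eqP ->//|]; exact: u2.
  - by move=> x /u3 xe; rewrite inE xe orbT.
  - by move=> x; rewrite mem_rcons !inE => /orP[->//|/u4 ->]; rewrite orbT.
  - by rewrite size_rcons /= addnS u5.
case: s cD u1 u2 u3 u4 u5 aS => [|z s'] cD u1 u2 u3 u4 u5 aS; first by rewrite inE.
rewrite inE => /eqP ->.
split.
- exact: take_uniq.
- move=> x /mem_take xs; rewrite !inE negb_or; apply/andP; split; last exact: u2.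
  by apply/eqP => xa; move: ae; rewrite -xa (u4 x xs).
- by move=> x; rewrite !inE => /orP[->//|/u3 ->]; rewrite orbT.
- by move=> x /mem_take /u4 xe; rewrite inE xe orbT.
- rewrite finset.cardsU1 aB /= size_takel; last exact: leqnSn.
  move: u5 => /= u5; lia.
Qed.

Lemma scd_count (D : seq ({set X} * seq X)) n :
  #|X| = n ->
  (forall F : {set X} -> R, \sum_(c <- D) \sum_(U <- chainsets c) F U =
     \sum_(U : {set X} | U \subset [set x in enum X]) F U) ->
  (forall c, c \in D -> inv_ok (enum X) c) -> (size D <= 'C(n, n./2))%N.
Proof.
move=> Xn HS HI.
pose F (U : {set X}) : R := (#|U| == n./2)%:R.
have F0 U : 0 <= F U by rewrite /F ler0n.
have H1 : forall c, c \in D -> 1 <= \sum_(U <- chainsets c) F U.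
  move=> [B s] cD; have [u1 u2 u3 u4 u5] := HI _ cD.
  rewrite /= -cardE Xn in u1 u2 u3 u4 u5.
  have hn := odd_double_half n; rewrite -addnn in hn.
  have ho : (odd n <= 1)%N := leq_b1 _.
  set j := (n./2 - #|B|)%N.
  have jle : (j <= size s)%N.
    rewrite /j; clear -u5 hn ho; move: (n ./2) (odd n) (#|B|) u5 hn ho => h o b; case: o => /= *; lia.
  have cardU : #|B :|: [set x in take j s]| = n./2.
    rewrite finset.cardsU.
    have -> : B :&: [set x in take j s] = set0.
      apply/setP => x; rewrite !inE; apply/negbTE/negP => /andP[xB /mem_take xs].
      by move: (u2 x xs); rewrite xB.
    rewrite finset.cards0 subn0 cardsE.
    rewrite (card_uniqP (take_uniq _ u1)) size_takel //.
    rewrite /j; lia.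
  rewrite sum_chainsets2.
  have jin : j \in iota 0 (size s).+1 by rewrite mem_iota add0n ltnS jle.
  have := @le_sum_seq nat (fun i => F (B :|: [set x in take i s])) _ j (fun i => F0 _) jin.
  by rewrite /F cardU eqxx.
have : ((size D)%:R : R) <= 'C(n, n./2)%:R.
  rewrite -sum1_size natr_sum.
  apply: (@le_trans _ _ (\sum_(c <- D) \sum_(U <- chainsets c) F U)).
    rewrite big_seq_cond [X in _ <= X]big_seq_cond.
    by apply: ler_sum => c /andP[cD _]; exact: H1.
  rewrite HS (eq_bigl (fun _ => true)); last first.
    by move=> U; apply/fintype.subsetP => x _; rewrite inE mem_enum.
  rewrite -Xn -card_draws -sum1_card natr_sum big_mkcond /=.
  rewrite [X in _ <= X]big_mkcond /= Xn; apply: ler_sum => U _; rewrite inE /F; by case: (_ == _).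
by rewrite ler_nat.
Qed.

Lemma sorted_chainsets c : sorted (fun U V : {set X} => U \subset V) (chainsets c).
Proof.
rewrite /chainsets sorted_map.
apply: (sub_sorted _ (iota_sorted 0 (size c.2).+1)) => i j ij /=.
apply: finset.setUS; apply/fintype.subsetP => x; rewrite !inE.
by rewrite -(take_takel c.2 ij) => /mem_take.
Qed.

Lemma diam_chain_inc (w : {set X} -> R) (L : seq {set X}) A :
  (forall U, 0 <= w U) -> sorted (fun U V => U \subset V) L ->
  diam (fun x => \sum_(U <- L) w U * (x \in U)%:R) A =
  \sum_(U <- L) w U * cut_div R U A.
Proof.
move=> w0 sL.
have sR : sorted (fun U V => V \subset U) (rev L) by rewrite rev_sorted.
rewrite -[RHS]big_rev -(diam_chain w (rev L) A w0 sR).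
by apply: diam_eq_on => x _; rewrite big_rev.
Qed.

Lemma cut_l1m n (delta : {set X} -> R) (lam : {set X} -> R) : #|X| = n ->
  (forall U, 0 <= lam U) -> (forall A, delta A = \sum_U lam U * cut_div R U A) ->
  exists m, (m <= 'C(n, n./2))%N /\ l1m_embeddable m delta.
Proof.
move=> Xn l0 Hd.
have [D [HS HI]] := @scd (enum X) (enum_uniq _).
exists (size D); split; first exact: scd_count Xn HS HI.
pose c0 : {set X} * seq X := (set0, [::]).
exists (fun x (i : 'I_(size D)) =>
  \sum_(U <- chainsets (nth c0 D i)) lam U * (x \in U)%:R).
move=> A; rewrite Hd.
under [RHS]eq_bigr => i _ do rewrite (diam_chain_inc _ _ _ l0 (sorted_chainsets _)).
pose G c := \sum_(U <- chainsets c) lam U * cut_div R U A.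
have E : \sum_(i < size D) G (nth c0 D i) = \sum_(c <- D) G c.
  by rewrite (big_nth c0) big_mkord.
rewrite E HS; apply: eq_bigl => U.
by apply/esym/fintype.subsetP => x _; rewrite inE mem_enum.
Qed.

End Div.

Theorem proposition9 (R : realType) (X : finType) (n : nat) (delta : {set X} -> R) :
  diversity delta -> #|X| = n ->
  (L1_embeddable delta <->
     exists m : nat, (m <= 'C(n, n./2))%N /\ l1m_embeddable m delta) /\
  ((exists m : nat, (m <= 'C(n, n./2))%N /\ l1m_embeddable m delta) <->
     exists lam : {set X} -> R, (forall U, 0 <= lam U) /\
       forall A, delta A = \sum_(U : {set X}) lam U * cut_div R U A).
Proof.
move=> _ Xn; split; split.
- by move=> /(@L1_cut R X) [lam [l0 Hl]]; exact: (@cut_l1m R X n delta lam Xn l0 Hl).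
- by case=> m [_ H]; exact: (@l1m_L1 R X m delta H).
- by case=> m [_ H]; exact: (@L1_cut R X delta (@l1m_L1 R X m delta H)).
- by case=> lam [l0 Hl]; exact: (@cut_l1m R X n delta lam Xn l0 Hl).
Qed.
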